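(* Let $K$ be a field and $m,n,r$ positive integers. Let $R=K[x_{ij}^k \mid 1\le i\le m,\ 1\le j\le n,\ 1\le k\le r]$ and let $I_{mn}^r$ be the ideal generated by all $2$-minors of the horizontal concatenation $H=(X_1\ \cdots\ X_r)$ and all $2$-minors of the vertical concatenation $V$ of the $m\times n$ matrices $X_k=(x_{ij}^k)$. Fix a diagonal term order, and let $\Delta$ be the simplicial complex on the vertex set $\mathcal P=\{(i,j):1\le i\le m,\ 1\le j\le nr\}$ whose Stanley–Reisner ideal is $\operatorname{in}(I_{mn}^r)$, where the variable $x_{ij}^k$ is identified with the vertex $(i,(k-1)n+j)$. Then a subset $F\subseteq\mathcal P$ is a facet of $\Delta$ if and only if there exist integers $m=g_0\ge g_1\ge\cdots\ge g_{r-1}\ge g_r=1$ and $n=h_0\ge h_1\ge\cdots\ge h_{r-1}\ge h_r=1$ such that $F$ is the union of $r$ paths $$(g_{k-1},(k-1)n+h_k)\longrightarrow (g_k,(k-1)n+h_{k-1}),\qquad 1\le k\le r.$$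
   Context: A term order is diagonal if the leading term of every $2$-minor of $H$ and of $V$ is the product of the entries on its main diagonal. A path from $(g_1,h_1)$ to $(g_t,h_t)$, written $(g_1,h_1)\longrightarrow(g_t,h_t)$, is a subset $\{(g_1,h_1),\dots,(g_t,h_t)\}\subseteq\mathcal P$ with $(g_{s+1},h_{s+1})-(g_s,h_s)\in\{(-1,0),(0,1)\}$ for all $s=1,\dots,t-1$; a single point $(g,h)$ is regarded as the path $(g,h)\longrightarrow(g,h)$. *)

(* Defs.v *)
From mathcomp Require Import all_boot all_algebra.
From mathcomp Require Import mpoly.
Set Implicit Arguments. Unset Strict Implicit. Unset Printing Implicit Defensive.
Import GRing.Theory.
Local Open Scope ring_scope.

(* Vertex set P = {(i,c) : 0 <= i < m, 0 <= c < r*n}, 0-based;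
   vertex (i,c) corresponds to the paper's (i+1, c+1). *)
Definition Pt (m n r : nat) := ('I_m * 'I_(r * n))%type.
Definition NV (m n r : nat) := #|{: Pt m n r}|.

Section Defs.
Variables (K : fieldType) (m n r : nat).

Notation P := (Pt m n r).
Notation N := (NV m n r).
Notation poly := {mpoly K[N]}.

Definition var (v : P) : poly := 'X_(enum_rank v).

Lemma colidx_proof (k : 'I_r) (j : 'I_n) : (k * n + j < r * n)%N.
Proof.
case: k j => k hk [j hj] /=.
apply: (@leq_trans (k * n + n)); first by rewrite ltn_add2l.
by rewrite -mulSnr leq_mul2r hk orbT.
Qed.

Definition colidx (k : 'I_r) (j : 'I_n) : 'I_(r * n) := Ordinal (colidx_proof k j).

Definition x (i : 'I_m) (j : 'I_n) (k : 'I_r) : poly := var (i, colidx k j).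

Definition minor2 (I J : Type) (A : I -> J -> poly) a1 a2 b1 b2 : poly :=
  A a1 b1 * A a2 b2 - A a1 b2 * A a2 b1.
Definition diag2 (I J : Type) (A : I -> J -> poly) a1 a2 b1 b2 : poly :=
  A a1 b1 * A a2 b2.

Definition H (i : 'I_m) (c : 'I_(r * n)) : poly := var (i, c).
(* V = vertical concatenation, rows indexed by (k,i) ~ row (k-1)m + i *)
Definition V (ki : 'I_r * 'I_m) (j : 'I_n) : poly := x ki.2 j ki.1.
Definition Vrow (ki : 'I_r * 'I_m) : nat := (ki.1 * m + ki.2)%N.

Definition is_H_minor (g d : poly) : Prop :=
  exists (i1 i2 : 'I_m) (c1 c2 : 'I_(r * n)),
    [/\ (i1 < i2)%N, (c1 < c2)%N, g = minor2 H i1 i2 c1 c2 & d = diag2 H i1 i2 c1 c2].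
Definition is_V_minor (g d : poly) : Prop :=
  exists (a1 a2 : 'I_r * 'I_m) (j1 j2 : 'I_n),
    [/\ (Vrow a1 < Vrow a2)%N, (j1 < j2)%N, g = minor2 V a1 a2 j1 j2
      & d = diag2 V a1 a2 j1 j2].

Definition is_2minor (g : poly) : Prop :=
  exists d, is_H_minor g d \/ is_V_minor g d.

Definition in_ideal (G : poly -> Prop) (q : poly) : Prop :=
  exists s : seq (poly * poly),
    (forall pr, pr \in s -> G pr.2) /\ q = \sum_(pr <- s) pr.1 * pr.2.

Definition Imnr : poly -> Prop := in_ideal is_2minor.

Definition term_order (le : rel 'X_{1..N}) : Prop :=
  [/\ reflexive le, antisymmetric le, transitive le & total le] /\
  (forall u, le 0%MM u) /\
      (forall u v w, le u v -> le (u + w)%MM (v + w)%MM).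

Definition is_lead (le : rel 'X_{1..N}) (p : poly) (u : 'X_{1..N}) : Prop :=
  u \in msupp p /\ forall v, v \in msupp p -> le v u.

Definition lead_term_is (le : rel 'X_{1..N}) (p t : poly) : Prop :=
  exists u, is_lead le p u /\ t = p@_u *: 'X_[u].

Definition diagonal (le : rel 'X_{1..N}) : Prop :=
  term_order le /\
  forall g d, is_H_minor g d \/ is_V_minor g d -> lead_term_is le g d.

Definition initial_ideal (le : rel 'X_{1..N}) (I : poly -> Prop) : poly -> Prop :=
  in_ideal (fun t => exists p, [/\ I p, p != 0 & lead_term_is le p t]).

Definition SR_face (J : poly -> Prop) (F : {set P}) : Prop :=
  ~ J (\prod_(v in F) var v).
Definition SR_facet (J : poly -> Prop) (F : {set P}) : Prop :=
  SR_face J F /\ forall G : {set P}, SR_face J G -> F \subset G -> G = F.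

(* paths, in 1-based coordinates (row g in 1..m, column h in 1..rn):
   S is a path (a --> b) if it is the point set of a nonempty sequence of
   points of P starting at a, ending at b, with steps (-1,0) or (0,1). *)
Definition step (p q : nat * nat) : bool :=
  ((q.1.+1 == p.1) && (q.2 == p.2)) || ((q.1 == p.1) && (q.2 == p.2.+1)).
Definition in_P (p : nat * nat) : bool :=
  [&& (1 <= p.1)%N, (p.1 <= m)%N, (1 <= p.2)%N & (p.2 <= r * n)%N].
Definition is_path (S : {set P}) (a b : nat * nat) : Prop :=
  exists s : seq (nat * nat),
    [/\ all in_P (a :: s), path step a s, last a s = b &
        S = [set v : P | ((v.1 : nat).+1, (v.2 : nat).+1) \in a :: s]].

End Defs.

(* Main.v *)
Require Import Defs.
From mathcomp Require Import all_boot all_algebra.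
From mathcomp Require Import mpoly.
From mathcomp Require Import zify.
From Stdlib Require Import Classical.
Set Implicit Arguments. Unset Strict Implicit. Unset Printing Implicit Defensive.
Import GRing.Theory.

Definition box (a b x : nat * nat) : bool :=
  [&& b.1 <= x.1, x.1 <= a.1, a.2 <= x.2 & x.2 <= b.2].

Lemma pair_eqE (x y : nat * nat) : x.1 = y.1 -> x.2 = y.2 -> x = y.
Proof. by case: x y => [? ?] [? ?] /= -> ->. Qed.

Lemma stepE p q : step p q -> (q.1.+1 = p.1 /\ q.2 = p.2) \/ (q.1 = p.1 /\ q.2 = p.2.+1).
Proof. by rewrite /step => /orP [/andP [/eqP -> /eqP ->]|/andP [/eqP -> /eqP ->]]; [left|right]. Qed.

Lemma path_box a s : path step a s -> forall x, x \in a :: s -> box a (last a s) x.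
Proof.
elim: s a => [|y s IH] a /=.
  by move=> _ x; rewrite inE => /eqP ->; rewrite /box !leqnn.
move=> /andP [st ps] x; rewrite inE => /orP [/eqP ->|xin].
  have := IH y ps y (mem_head _ _); rewrite /box.
  case/stepE: st => [[<- ->]|[-> ->]] /and4P [h1 h2 h3 h4]; apply/and4P; split; lia.
have := IH y ps x xin; rewrite /box.
case/stepE: st => [[<- ->]|[-> ->]] /and4P [h1 h2 h3 h4]; apply/and4P; split; lia.
Qed.

Definition chainp (x y : nat * nat) : Prop :=
  (y.1 <= x.1 /\ x.2 <= y.2) \/ (x.1 <= y.1 /\ y.2 <= x.2).

Lemma path_chain a s : path step a s -> forall x y, x \in a :: s -> y \in a :: s -> chainp x y.
Proof.
elim: s a => [|z s IH] a /=.
  move=> _ x y; rewrite !inE => /eqP -> /eqP ->; left; lia.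
move=> /andP [st ps] x y.
have bx := path_box (a := a) (s := z :: s); rewrite /= st ps /= in bx.
have bx' := bx is_true_true.
rewrite inE => /orP [/eqP ->|xin].
  rewrite inE => /orP [/eqP ->|yin]; first by left; lia.
  have := bx' y; rewrite inE yin orbT => /(_ is_true_true) /and4P [? ? ? ?]; left; lia.
rewrite inE => /orP [/eqP ->|yin].
  have := bx' x; rewrite inE xin orbT => /(_ is_true_true) /and4P [? ? ? ?]; right; lia.
exact: (IH z ps x y xin yin).
Qed.

Lemma path_diag a s : path step a s -> forall t,
  t <= (a.1 - (last a s).1) + ((last a s).2 - a.2) ->
  exists2 x, x \in a :: s & x.2 + a.1 = x.1 + a.2 + t.
Proof.
elim: s a => [|y s IH] a /=.
  move=> _ t; rewrite !subnn => ht; exists a; rewrite ?mem_head //; lia.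
move=> /andP [st ps] [|t] ht.
  by exists a; rewrite ?mem_head //; lia.
have := path_box ps (mem_head _ _); rewrite /box => /and4P [h1 h2 h3 h4].
case: (IH y ps t _).
  case/stepE: st => [[e1 e2]|[e1 e2]]; lia.
move=> [x1 x2] xin /= hx; exists (x1, x2); first by rewrite inE xin orbT.
case/stepE: st => [[e1 e2]|[e1 e2]]; rewrite /=; lia.
Qed.

Lemma path_exists (C : pred (nat * nat)) (a b : nat * nat) :
  b.1 <= a.1 -> a.2 <= b.2 ->
  (forall x, C x -> box a b x) ->
  (forall x y, C x -> C y -> chainp x y) ->
  exists s, [/\ path step a s, last a s = b & forall x, C x -> x \in a :: s].
Proof.
move Hd : ((a.1 - b.1) + (b.2 - a.2)) => d.
elim: d C a Hd => [|d IH] C a Hd h1 h2 hb hc.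
  exists [::]; split => //=.
    by apply: pair_eqE; lia.
  move=> x /hb; rewrite /box => /and4P [? ? ? ?]; rewrite inE; apply/eqP.
  by apply: pair_eqE; lia.
set C' := [pred x | C x && (x != a)].
have hc' : forall x y, C' x -> C' y -> chainp x y.
  by move=> x y /andP [cx _] /andP [cy _]; apply: hc.
case: (classic (b.1 < a.1 /\ ~ (exists2 x, C x & x.1 = a.1 /\ a.2 < x.2))) => [[hlt hno]|hor].
  pose a' := (a.1.-1, a.2).
  case: (IH C' a' _ _ _ _ hc').
  - rewrite /a' /=; lia.
  - rewrite /a' /=; lia.
  - by rewrite /a'.
  - move=> x /andP [cx xa]; have := hb x cx; rewrite /box /a' /= => /and4P [? ? ? ?].
    apply/and4P; split => //.
    case: (ltnP x.1 a.1) => hx1; first lia.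
    have ex1 : x.1 = a.1 by lia.
    case: (ltnP a.2 x.2) => hx2; first by exfalso; apply: hno; exists x.
    by move: xa; rewrite (@pair_eqE x a) ?eqxx //; lia.
  move=> s [ps ls hs]; exists (a' :: s); split => //=.
    rewrite ps andbT /step /a' /=; apply/orP; left; rewrite !eqxx andbT; apply/eqP; lia.
  move=> x cx; case: (eqVneq x a) => [->|xa]; first by rewrite mem_head.
  by rewrite inE hs ?orbT //= cx xa.
have hlt2 : a.2 < b.2.
  case: (ltnP b.1 a.1) => h.
    case: (classic (exists2 x, C x & x.1 = a.1 /\ a.2 < x.2)) => [[x cx [_ hx]]|hn].
      by have := hb x cx; rewrite /box => /and4P [? ? ? ?]; lia.
    by exfalso; apply: hor.
  lia.
pose a' := (a.1, a.2.+1).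
case: (IH C' a' _ _ _ _ hc').
- rewrite /a' /=; lia.
- rewrite /a' /=; lia.
- by rewrite /a'.
- move=> x /andP [cx xa]; have := hb x cx; rewrite /box /a' /= => /and4P [? ? ? ?].
  apply/and4P; split => //.
  case: (ltnP a.2 x.2) => hx2 //.
  have ex2 : x.2 = a.2 by lia.
  have hx1 : x.1 < a.1.
    case: (ltnP x.1 a.1) => // hx1; move: xa.
    by rewrite (@pair_eqE x a) ?eqxx //; lia.
  case: (ltnP b.1 a.1) => h; last lia.
  case: (classic (exists2 y, C y & y.1 = a.1 /\ a.2 < y.2)) => [[y cy [ey hy]]|hn].
    by case: (hc x y cx cy) => [[? ?]|[? ?]]; lia.
  by exfalso; apply: hor.
move=> s [ps ls hs]; exists (a' :: s); split => //=.
  rewrite ps andbT /step /a' /=; apply/orP; right; rewrite !eqxx /=.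
  by [].
move=> x cx; case: (eqVneq x a) => [->|xa]; first by rewrite mem_head.
by rewrite inE hs ?orbT //= cx xa.
Qed.

Section LemA.
Variables p q : nat.
Definition acf (f : 'I_p -> 'I_q -> nat) :=
  forall (a1 a2 : 'I_p) (b1 b2 : 'I_q), a1 < a2 -> b1 < b2 -> 0 < f a1 b1 -> 0 < f a2 b2 -> False.

Lemma sum_pos (I : finType) (F : I -> nat) : 0 < \sum_i F i -> exists i, 0 < F i.
Proof.
move=> h; case: (pickP (fun i => 0 < F i)) => [i hi|hn]; first by exists i.
move: h; rewrite big1 // => i _; have := hn i; rewrite /= lt0n => /negbFE /eqP.
by [].
Qed.

Lemma sum_zero (I : finType) (F : I -> nat) : \sum_i F i = 0 -> forall i, F i = 0.
Proof.
move=> h i; apply/eqP; rewrite -leqn0 -h.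
by rewrite (bigD1 i) //= leq_addr.
Qed.



Lemma lemA (f g : 'I_p -> 'I_q -> nat) : acf f -> acf g ->
  (forall a, \sum_b f a b = \sum_b g a b) -> (forall b, \sum_a f a b = \sum_a g a b) ->
  forall a b, f a b = g a b.
Proof.
move Hm : (\sum_a \sum_b f a b) => M.
elim: M {-2}M (leqnn M) f g Hm => [|M IH] M0 hM f g Hm af ag rowE colE.
  have fz : forall a b, f a b = 0.
    move=> a; apply: sum_zero; move: a; apply: sum_zero; lia.
  have gz : forall a b, g a b = 0.
    by move=> a; apply: sum_zero; rewrite -rowE; apply/eqP; rewrite big1.
  by move=> a b; rewrite fz gz.
case: (posnP M0) => [M00|M0p].
  have fz : forall a b, f a b = 0.
    move=> a; apply: sum_zero; move: a; apply: sum_zero; lia.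
  have gz : forall a b, g a b = 0.
    by move=> a; apply: sum_zero; rewrite -rowE; apply/eqP; rewrite big1.
  by move=> a b; rewrite fz gz.
have [a0 ha0] : exists a, 0 < \sum_b f a b by apply: sum_pos; lia.
case: (@arg_maxnP _ a0 (fun a => 0 < \sum_b f a b) (fun a : 'I_p => (a : nat)) ha0) => as_ Pas maxas.
have [b0 hb0] := sum_pos Pas.
have Pb0 : 0 < \sum_a f a b0 by rewrite (bigD1 as_) //= ltn_addr.
case: (@arg_minnP _ b0 (fun b => 0 < \sum_a f a b) (fun b : 'I_q => (b : nat)) Pb0) => bs Pbs minbs.
have key : forall h : 'I_p -> 'I_q -> nat, acf h ->
    (forall a, \sum_b f a b = \sum_b h a b) -> (forall b, \sum_a f a b = \sum_a h a b) ->
    0 < h as_ bs.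
  move=> h ah rE cE.
  have [b1 hb1] : exists b, 0 < h as_ b by apply: sum_pos; rewrite -rE.
  have [a1 ha1] : exists a, 0 < h a bs by apply: sum_pos; rewrite -cE.
  have le1 : bs <= b1 by apply: minbs; rewrite cE (bigD1 as_) //= ltn_addr.
  have le2 : a1 <= as_ by apply: maxas; rewrite rE (bigD1 bs) //= ltn_addr.
  case: (eqVneq b1 bs) => [<- //|nb].
  case: (eqVneq a1 as_) => [<- //|na].
  exfalso; apply: (ah a1 as_ bs b1) => //.
    by rewrite ltn_neqAle le2 andbT; apply/eqP => /val_inj; apply/eqP.
  by rewrite ltn_neqAle le1 andbT; apply/eqP => /val_inj/esym; apply/eqP.
have fp : 0 < f as_ bs by apply: key.
have gp : 0 < g as_ bs by apply: key.
pose d (a : 'I_p) (b : 'I_q) : nat := (a == as_) && (b == bs).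
pose f' a b := f a b - d a b.
pose g' a b := g a b - d a b.
have fE : forall a b, f a b = f' a b + d a b.
  move=> a b; rewrite /f' /d; case: eqP => [->|]; case: eqP => [->|] //= *; lia.
have gE : forall a b, g a b = g' a b + d a b.
  move=> a b; rewrite /g' /d; case: eqP => [->|]; case: eqP => [->|] //= *; lia.
have sd : forall a, \sum_b d a b = (a == as_).
  move=> a; rewrite (bigD1 bs) //= big1 ?addn0; first by rewrite /d eqxx andbT.
  by move=> b /negbTE nb; rewrite /d nb andbF.
have sd' : forall b, \sum_a d a b = (b == bs).
  move=> b; rewrite (bigD1 as_) //= big1 ?addn0; first by rewrite /d eqxx.
  by move=> a /negbTE na; rewrite /d na.
have rowf : forall a, \sum_b f a b = \sum_b f' a b + (a == as_).
  by move=> a; rewrite -sd -big_split; apply: eq_bigr => b _; apply: fE.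
have rowg : forall a, \sum_b g a b = \sum_b g' a b + (a == as_).
  by move=> a; rewrite -sd -big_split; apply: eq_bigr => b _; apply: gE.
have colf : forall b, \sum_a f a b = \sum_a f' a b + (b == bs).
  by move=> b; rewrite -sd' -big_split; apply: eq_bigr => a _; apply: fE.
have colg : forall b, \sum_a g a b = \sum_a g' a b + (b == bs).
  by move=> b; rewrite -sd' -big_split; apply: eq_bigr => a _; apply: gE.
have tot : \sum_a \sum_b f a b = \sum_a \sum_b f' a b + 1.
  rewrite (eq_bigr _ (fun a _ => rowf a)) big_split /=; congr addn.
  by rewrite (bigD1 as_) //= eqxx big1 // => a /negbTE ->.
have eq' : forall a b, f' a b = g' a b.
  apply: (IH (\sum_a \sum_b f' a b)) => //.
  - lia.
  - by move=> a1 a2 b1 b2 h1 h2 p1 p2; apply: (af a1 a2 b1 b2) => //;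
      [rewrite fE; lia | rewrite fE; lia].
  - by move=> a1 a2 b1 b2 h1 h2 p1 p2; apply: (ag a1 a2 b1 b2) => //;
      [rewrite gE; lia | rewrite gE; lia].
  - by move=> a; apply/eqP; rewrite -(eqn_add2r (a == as_)) -rowf -rowg rowE.
  - by move=> b; apply/eqP; rewrite -(eqn_add2r (b == bs)) -colf -colg colE.
by move=> a b; rewrite fE gE eq'.
Qed.
End LemA.

Section Comb.
Variables (m n r : nat) (hm : 0 < m) (hn : 0 < n) (hr : 0 < r).
Local Notation P := (Pt m n r).

Definition ri (v : P) : nat := v.1.
Definition ci (v : P) : nat := v.2.
Definition kc (v : P) : nat := ci v %/ n.
Definition jc (v : P) : nat := ci v %% n.
Definition bad (v w : P) : bool :=
  ((ri v < ri w) && (ci v < ci w)) || ((kc v < kc w) && (jc v < jc w)).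
Definition face_c (F : {set P}) := forall v w, v \in F -> w \in F -> ~~ bad v w.
Definition pt (v : P) : nat * nat := ((ri v).+1, (ci v).+1).

Lemma v2E (v : P) : ci v = kc v * n + jc v.
Proof. exact: divn_eq. Qed.
Lemma jc_lt (v : P) : jc v < n.
Proof. by rewrite /jc ltn_mod. Qed.
Lemma kc_lt (v : P) : kc v < r.
Proof. by rewrite /kc ltn_divLR //; apply: ltn_ord. Qed.
Lemma v1_lt (v : P) : ri v < m.
Proof. exact: ltn_ord. Qed.
Lemma v2_lt (v : P) : ci v < r * n.
Proof. exact: ltn_ord. Qed.

Lemma pt_inj : injective pt.
Proof.
move=> [a b] [c d] [/= e1 e2]; congr pair; exact: val_inj.
Qed.

Lemma pt_of x : in_P m n r x -> exists v : P, pt v = x.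
Proof.
case: x => x1 x2; rewrite /in_P /= => /and4P [h1 h2 h3 h4].
have l1 : x1.-1 < m by lia.
have l2 : x2.-1 < r * n by lia.
exists (Ordinal l1, Ordinal l2); rewrite /pt /ri /ci /=; congr pair; lia.
Qed.

Lemma mono_le (g : nat -> nat) : (forall k, k < r -> g k.+1 <= g k) ->
  forall k1 k2, k1 <= k2 -> k2 <= r -> g k2 <= g k1.
Proof.
move=> hg k1 k2 h12; elim: k2 h12 => [|k2 IH] h12 hk.
  by rewrite leqn0 in h12; rewrite (eqP h12).
case: (ltngtP k1 k2.+1) h12 => // [lt _|-> _ //].
apply: leq_trans (hg _ hk) (IH _ (ltnW hk)); lia.
Qed.

Definition PU (g h : nat -> nat) (S : 'I_r -> {set P}) : Prop :=
  [/\ g 0 = m, g r = 1 & (forall k, k < r -> g k.+1 <= g k)] /\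
  [/\ h 0 = n, h r = 1 & (forall k, k < r -> h k.+1 <= h k)] /\
  (forall k : 'I_r, is_path (S k) (g k, k * n + h k.+1) (g k.+1, k * n + h k)).

Lemma ends_in (S : {set P}) a b : is_path S a b ->
  exists va vb, [/\ va \in S, vb \in S, pt va = a & pt vb = b].
Proof.
case=> s [ha ps ls ->].
have [va pva] : exists va, pt va = a by apply: pt_of; move: ha => /= /andP [].
have hb : b \in a :: s by rewrite -ls mem_last.
have [vb pvb] : exists vb, pt vb = b by apply: pt_of; move/allP: ha; apply.
by exists va, vb; rewrite !in_set -/(pt va) -/(pt vb) pva pvb hb mem_head.
Qed.

Section PUfacts.
Variables (g h : nat -> nat) (S : 'I_r -> {set P}).
Hypothesis hPU : PU g h S.

Lemma g_bnd k : k <= r -> 1 <= g k <= m.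
Proof.
case: hPU => [[g0 gr gm] _] hk; apply/andP; split.
  by rewrite -gr; apply: mono_le.
by rewrite -[X in _ <= X]g0; apply: mono_le.
Qed.
Lemma h_bnd k : k <= r -> 1 <= h k <= n.
Proof.
case: hPU => [_ [[h0 hr' hmo] _]] hk; apply/andP; split.
  by rewrite -hr'; apply: mono_le.
by rewrite -[X in _ <= X]h0; apply: mono_le.
Qed.

Lemma blk (k : 'I_r) v : v \in S k ->
  [/\ g k.+1 <= (ri v).+1 <= g k, kc v = k & h k.+1 <= (jc v).+1 <= h k].
Proof.
case: hPU => _ [_ hp]; case: (hp k) => s [ha ps ls ->].
rewrite inE -/(pt v) => vin.
have := path_box ps vin; rewrite ls /box /= => /and4P [b1 b2 b3 b4].
have hk1 := h_bnd (ltnW (ltn_ord k)); have hk2 := h_bnd (ltn_ord k).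
have e := v2E v; have jl := jc_lt v.
have ekc : kc v = k.
  apply/eqP; rewrite eqn_leq; apply/andP; split.
    have : kc v * n < k.+1 * n by lia.
    by rewrite ltn_mul2r => /andP [].
  have : k * n < (kc v).+1 * n by lia.
  by rewrite ltn_mul2r => /andP [].
split => //; rewrite ekc in e; lia.
Qed.

Lemma PU_face : face_c (\bigcup_(k < r) S k).
Proof.
have gm : forall k1 k2, k1 <= k2 -> k2 <= r -> g k2 <= g k1.
  by case: hPU => [[_ _ gm] _]; apply: mono_le.
have hmo : forall k1 k2, k1 <= k2 -> k2 <= r -> h k2 <= h k1.
  by case: hPU => [_ [[_ _ hm'] _]]; apply: mono_le.
have aux : forall (k1 k2 : 'I_r) v w, k1 < k2 -> v \in S k1 -> w \in S k2 ->
    ~~ bad v w && ~~ bad w v.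
  move=> k1 k2 v w lt vin win.
  case: (blk vin) => /andP [a1 a2] e1 /andP [a3 a4].
  case: (blk win) => /andP [b1 b2] e2 /andP [b3 b4].
  have := gm k1.+1 k2 lt (ltnW (ltn_ord _)); have := hmo k1.+1 k2 lt (ltnW (ltn_ord _)).
  have ev := v2E v; have ew := v2E w; have jv := jc_lt v; have jw := jc_lt w.
  have : k1.+1 * n <= k2 * n by rewrite leq_mul2r lt orbT.
  rewrite /bad ev ew e1 e2 => *; apply/andP; split; apply/negP; lia.
move=> v w /bigcupP [k1 _ vin] /bigcupP [k2 _ win].
case: (ltngtP k1 k2) => [lt|lt|/val_inj e].
- by case/andP: (aux _ _ _ _ lt vin win).
- by case/andP: (aux _ _ _ _ lt win vin).
subst k2.
case: hPU => _ [_ hp]; case: (hp k1) => s [ha ps ls eS].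
move: (vin) (win); rewrite eS !inE -/(pt v) -/(pt w) => vin' win'.
have := path_chain ps vin' win'; rewrite /chainp /=.
case: (blk vin) => _ e1 _; case: (blk win) => _ e2 _.
rewrite /bad e1 e2 ltnn /= => hc; apply/negP; rewrite /pt /= in hc; lia.
Qed.

Lemma PU_max z : z \notin \bigcup_(k < r) S k ->
  exists2 v, v \in \bigcup_(k < r) S k & bad v z || bad z v.
Proof.
move=> zn.
have hp : forall k : 'I_r, is_path (S k) (g k, k * n + h k.+1) (g k.+1, k * n + h k).
  by case: hPU => _ [_ hp].
case: hPU => [[g0 gr gm] [[h0 hr' hmo] _]].
have ez := v2E z; have jz := jc_lt z; have z1 := v1_lt z; have kz := kc_lt z.
have inU : forall (k : 'I_r) v, v \in S k -> v \in \bigcup_(k < r) S k.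
  by move=> k v vin; apply/bigcupP; exists k.
have gmo := mono_le gm; have hmon := mono_le hmo.
case: (ltnP (g (kc z)) (ri z).+1) => c1.
  have kpos : 0 < kc z by case: (posnP (kc z)) c1 => [->|//]; rewrite g0; lia.
  have lk : (kc z).-1 < r by lia.
  have [va [vb [vain vbin _ pvb]]] := ends_in (hp (Ordinal lk)).
  exists vb; first exact: inU vbin.
  case: (blk vbin) => _ e1 _; have := jc_lt vb; have := v2E vb.
  have ek : (kc z).-1.+1 = kc z by rewrite prednK.
  have en : (kc z).-1 * n + n = kc z * n by rewrite -[in RHS]ek mulSn addnC.
  move: pvb; rewrite /pt /= ek => [[p1 p2]].
  have hb := h_bnd (ltnW lk).
  rewrite /= in e1; rewrite e1 => *.
  rewrite /bad; apply/orP; left; apply/orP; left; apply/andP; split; lia.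
case: (ltnP (ri z).+1 (g (kc z).+1)) => c2.
  have lk : (kc z).+1 < r.
    case: (ltngtP (kc z).+1 r) => // e; [lia | by move: c2; rewrite e gr; lia].
  have [va [vb [vain vbin pva _]]] := ends_in (hp (Ordinal lk)).
  exists va; first exact: inU vain.
  case: (blk vain) => _ e1 _; have := jc_lt va; have := v2E va.
  have en : kc z * n + n = (kc z).+1 * n by rewrite mulSn addnC.
  move: pva; rewrite /pt /= => [[p1 p2]].
  have hb := h_bnd lk.
  rewrite /= in e1; rewrite e1 => *.
  rewrite /bad; apply/orP; right; apply/orP; left; apply/andP; split; lia.
case: (ltnP (h (kc z)) (jc z).+1) => c3.
  have kpos : 0 < kc z by case: (posnP (kc z)) c3 => [->|//]; rewrite h0; lia.
  have lk : (kc z).-1 < r by lia.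
  have [va [vb [vain vbin pva _]]] := ends_in (hp (Ordinal lk)).
  exists va; first exact: inU vain.
  case: (blk vain) => _ e1 _; have := jc_lt va; have := v2E va.
  have ek : (kc z).-1.+1 = kc z by rewrite prednK.
  move: pva; rewrite /pt /= ek => [[p1 p2]].
  rewrite /= in e1; rewrite e1 => *.
  have hb := h_bnd (ltnW lk).
  have : jc va = (h (kc z)).-1.
    have : (kc z).-1 * n + jc va = (kc z).-1 * n + (h (kc z)).-1 by lia.
    by move/addnI.
  move=> ej.
  rewrite /bad; apply/orP; left; apply/orP; right; apply/andP; split; lia.
case: (ltnP (jc z).+1 (h (kc z).+1)) => c4.
  have lk : (kc z).+1 < r.
    case: (ltngtP (kc z).+1 r) => // e; [lia | by move: c4; rewrite e hr'; lia].
  have [va [vb [vain vbin _ pvb]]] := ends_in (hp (Ordinal lk)).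
  exists vb; first exact: inU vbin.
  case: (blk vbin) => _ e1 _; have := jc_lt vb; have := v2E vb.
  move: pvb; rewrite /pt /= => [[p1 p2]].
  rewrite /= in e1; rewrite e1 => *.
  have hb := h_bnd lk.
  have : jc vb = (h (kc z).+1).-1.
    have : (kc z).+1 * n + jc vb = (kc z).+1 * n + (h (kc z).+1).-1 by lia.
    by move/addnI.
  move=> ej.
  rewrite /bad; apply/orP; right; apply/orP; right; apply/andP; split; lia.
pose kk := Ordinal kz.
case: (hp kk) => s [ha ps ls eS].
have hb1 := h_bnd (ltnW kz); have hb2 := h_bnd kz.
have := path_diag ps (t := ((jc z).+1 - h (kc z).+1) + (g (kc z) - (ri z).+1)).
rewrite ls /= => /(_ _) [].
  have := gmo (kc z) (kc z).+1 (leqnSn _) kz; lia.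
move=> x xin hx.
have [v pv] : exists v, pt v = x by apply: pt_of; move/allP: ha; apply.
have vin : v \in S kk by rewrite eS in_set -/(pt v) pv.
exists v; first exact: inU vin.
case: (blk vin) => _ e1 _; have := v2E v; rewrite /= in e1; rewrite e1 => ev.
move: hx; rewrite -pv /pt /= => hx.
have e : ci v + ri z = ri v + ci z by lia.
case: (ltngtP (ri v) (ri z)) => c5.
- by rewrite /bad; apply/orP; left; apply/orP; left; apply/andP; split; lia.
- by rewrite /bad; apply/orP; right; apply/orP; left; apply/andP; split; lia.
exfalso; move/negP: zn; apply.
have -> : z = v.
  move: c5 e; rewrite /ri /ci => c5 e.
  have e2 : z.2 = v.2 by apply: val_inj; rewrite /= ; lia.
  by move: (val_inj c5) e2; case: (z) (v) => ? ? [? ?] /= -> ->.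
exact: inU vin.
Qed.

Lemma PU_facet : face_c (\bigcup_(k < r) S k) /\
  forall G : {set P}, face_c G -> \bigcup_(k < r) S k \subset G -> G = \bigcup_(k < r) S k.
Proof.
split; first exact: PU_face.
move=> G fG sub; apply/eqP; rewrite eqEsubset sub andbT.
apply/subsetP => z zG; apply/negPn/negP => zn.
have [v vin] := PU_max zn.
have vG : v \in G by apply: (subsetP sub).
by case/orP; apply/negP; apply: fG.
Qed.
End PUfacts.

Lemma kc_lt_ci (v w : P) : kc v < kc w -> ci v < ci w.
Proof. by move=> h; rewrite ltnNge; apply/negP => /(leq_div2r n); rewrite -/(kc w) -/(kc v) leqNgt h. Qed.

Lemma facet_PU (F : {set P}) : face_c F ->
  (forall G, face_c G -> F \subset G -> G = F) ->
  exists g h S, PU g h S /\ F = \bigcup_(k < r) S k.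
Proof.
move=> fF mF.
pose g k := if k == 0 then m else maxn 1 (\max_(v in F | k <= kc v) (ri v).+1).
pose h k := if k == 0 then n else maxn 1 (\max_(v in F | k <= kc v) (jc v).+1).
have gr : g r = 1.
  rewrite /g; case: eqP => [e|_]; first lia.
  suff : \max_(v in F | r <= kc v) (ri v).+1 <= 0 by lia.
  by apply/bigmax_leqP => v /andP [_]; rewrite leqNgt kc_lt.
have hr' : h r = 1.
  rewrite /h; case: eqP => [e|_]; first lia.
  suff : \max_(v in F | r <= kc v) (jc v).+1 <= 0 by lia.
  by apply/bigmax_leqP => v /andP [_]; rewrite leqNgt kc_lt.
have gle : forall k, 1 <= g k <= m.
  move=> k; rewrite /g; case: eqP => _; first lia.
  have : \max_(v in F | k <= kc v) (ri v).+1 <= m by apply/bigmax_leqP => v _; exact: v1_lt.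
  lia.
have hle : forall k, 1 <= h k <= n.
  move=> k; rewrite /h; case: eqP => _; first lia.
  have : \max_(v in F | k <= kc v) (jc v).+1 <= n by apply/bigmax_leqP => v _; exact: jc_lt.
  lia.
have gm : forall k, k < r -> g k.+1 <= g k.
  move=> k _; case: (posnP k) => [->|kp].
    by have := gle 1; rewrite /g /=; lia.
  rewrite /g /= (negbTE (lt0n_neq0 kp)).
  rewrite geq_max leq_maxl /= leq_max; apply/orP; right.
  apply/bigmax_leqP => v /andP [vF kv]; apply: leq_bigmax_cond; rewrite vF /=; lia.
have hmo : forall k, k < r -> h k.+1 <= h k.
  move=> k _; case: (posnP k) => [->|kp].
    by have := hle 1; rewrite /h /=; lia.
  rewrite /h /= (negbTE (lt0n_neq0 kp)).
  rewrite geq_max leq_maxl /= leq_max; apply/orP; right.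
  apply/bigmax_leqP => v /andP [vF kv]; apply: leq_bigmax_cond; rewrite vF /=; lia.
have G1 : forall v, v \in F -> (ri v).+1 <= g (kc v).
  move=> v vF; rewrite /g; case: eqP => _; first exact: v1_lt.
  rewrite leq_max; apply/orP; right; apply: leq_bigmax_cond; by rewrite vF /=.
have H1 : forall v, v \in F -> (jc v).+1 <= h (kc v).
  move=> v vF; rewrite /h; case: eqP => _; first exact: jc_lt.
  rewrite leq_max; apply/orP; right; apply: leq_bigmax_cond; by rewrite vF /=.
have G2 : forall v, v \in F -> g (kc v).+1 <= (ri v).+1.
  move=> v vF; rewrite /g /=.
  rewrite geq_max; apply/andP; split => //.
  apply/bigmax_leqP => w /andP [wF kw].
  have := fF v w vF wF; rewrite /bad kc_lt_ci // kw /=.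
  by rewrite andbT negb_or => /andP [/negP ? _]; lia.
have H2 : forall v, v \in F -> h (kc v).+1 <= (jc v).+1.
  move=> v vF; rewrite /h /=.
  rewrite geq_max; apply/andP; split => //.
  apply/bigmax_leqP => w /andP [wF kw].
  have := fF v w vF wF; rewrite /bad kw /=.
  by rewrite negb_or => /andP [_ /negP ?]; lia.
have gmo := mono_le gm; have hmon := mono_le hmo.
have exs : forall k : 'I_r, exists s : seq (nat * nat),
    [/\ path step (g k, k * n + h k.+1) s, last (g k, k * n + h k.+1) s = (g k.+1, k * n + h k),
        all (in_P m n r) ((g k, k * n + h k.+1) :: s) &
        forall v, v \in F -> kc v = k -> pt v \in (g k, k * n + h k.+1) :: s].
  move=> k.
  pose C := [pred x | [exists v in F, (kc v == k) && (pt v == x)]].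
  have hk := hmon k k.+1 (leqnSn _) (ltn_ord k).
  have gk := gmo k k.+1 (leqnSn _) (ltn_ord k).
  case: (path_exists (C := C) (a := (g k, k * n + h k.+1)) (b := (g k.+1, k * n + h k))).
  - exact: gk.
  - by rewrite leq_add2l.
  - move=> x /existsP [v /and3P [vF /eqP kv /eqP <-]].
    have := G1 v vF; have := G2 v vF; have := H1 v vF; have := H2 v vF; have := v2E v.
    rewrite /box /pt /= kv => *; apply/and4P; split; lia.
  - move=> x y /existsP [v /and3P [vF /eqP kv /eqP <-]] /existsP [w /and3P [wF /eqP kw /eqP <-]].
    have := fF v w vF wF; have := fF w v wF vF; have := v2E v; have := v2E w.
    rewrite /bad /chainp /pt /= kv kw ltnn /= => *; lia.
  move=> s [ps ls hs]; exists s; split => //.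
    apply/allP => x xin; have := path_box ps xin; rewrite ls /box /in_P /=.
    have := gle k; have := gle k.+1; have := hle k; have := hle k.+1.
    have : k * n + n <= r * n by rewrite addnC -mulSn leq_mul2r ltn_ord orbT.
    move=> *; apply/and4P; split; lia.
  move=> v vF kv; apply: hs; apply/existsP; exists v; rewrite vF kv !eqxx.
  by [].
have [sf hsf] := fin_all_exists exs.
pose S (k : 'I_r) := [set v : P | pt v \in (g k, k * n + h k.+1) :: sf k].
have hPU : PU g h S.
  split; first by split.
  split; first by split.
  move=> k; case: (hsf k) => ps ls ha _; exists (sf k); split => //.
have sub : F \subset \bigcup_(k < r) S k.
  apply/subsetP => v vF; apply/bigcupP; exists (Ordinal (kc_lt v)) => //.
  by rewrite in_set; case: (hsf (Ordinal (kc_lt v))) => _ _ _; apply.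
exists g, h, S; split => //.
by rewrite (mF _ (PU_face hPU) sub).
Qed.
End Comb.

Section Alg.
Variables (K : fieldType) (m n r : nat) (hm : 0 < m) (hn : 0 < n) (hr : 0 < r).
Variable le : rel 'X_{1..NV m n r}.
Hypothesis hdiag : @diagonal K m n r le.
Local Notation P := (Pt m n r).
Local Notation N := (NV m n r).
Local Notation poly := {mpoly K[N]}.
Local Notation vr := (@var K m n r).
Local Notation bad := (@bad m n r).

Definition rk (v : P) : 'I_N := enum_rank v.
Definition Ux (v : P) : 'X_{1..N} := U_(rk v)%MM.

Lemma varE v : vr v = 'X_[Ux v].
Proof. by []. Qed.

Lemma rk_inj : injective rk.
Proof. exact: enum_rank_inj. Qed.

Definition Sw (f : P -> nat) (w : 'X_{1..N}) : nat := \sum_(v : P) f v * w (rk v).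

Lemma S_add f w1 w2 : Sw f (w1 + w2)%MM = Sw f w1 + Sw f w2.
Proof. by rewrite /Sw -big_split; apply: eq_bigr => v _; rewrite mnmDE mulnDr. Qed.

Lemma S_U f a : Sw f (Ux a) = f a.
Proof.
rewrite /Sw (bigD1 a) //= big1 ?addn0; first by rewrite /Ux mnm1E eqxx muln1.
by move=> v va; rewrite /Ux mnm1E (inj_eq rk_inj) eq_sym (negbTE va) muln0.
Qed.

Definition coord (s : nat) (v : P) : nat :=
  if s == 0 then ri v else if s == 1 then kc v else jc v.
Definition famf (s t : nat) (v : P) : nat := coord s v == t.
Definition TT := m + r + n.
Definition phib (x y : 'X_{1..N}) : bool :=
  (mdeg x == mdeg y) &&
  [forall s : 'I_3, [forall t : 'I_TT, Sw (famf s t) x == Sw (famf s t) y]].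

Lemma phibP x y : reflect (mdeg x = mdeg y /\ forall (s : 'I_3) (t : 'I_TT), Sw (famf s t) x = Sw (famf s t) y) (phib x y).
Proof.
apply: (iffP andP) => [[/eqP h1 /forallP h2]|[h1 h2]].
  by split => // s t; have /forallP /(_ t) /eqP := h2 s.
by split; [apply/eqP|apply/forallP => s; apply/forallP => t; apply/eqP].
Qed.

Lemma phib_refl x : phib x x.
Proof. by apply/phibP. Qed.
Lemma phib_sym x y : phib x y -> phib y x.
Proof. by move/phibP => [h1 h2]; apply/phibP; split => // s t; rewrite h2. Qed.
Lemma phib_trans x y z : phib x y -> phib y z -> phib x z.
Proof.
move/phibP => [h1 h2] /phibP [h3 h4]; apply/phibP; split; first by rewrite h1.
by move=> s t; rewrite h2.
Qed.
Lemma phib_add z x y : phib x y -> phib (z + x)%MM (z + y)%MM.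
Proof.
move/phibP => [h1 h2]; apply/phibP; split; first by rewrite !mdegD h1.
by move=> s t; rewrite !S_add h2.
Qed.

Definition pot (v : P) : nat := n * ri v * kc v + m * jc v * kc v + ri v * jc v.

Definition quad (a b a' b' : P) : Prop :=
  [/\ ri a' = ri a, ri b' = ri b,
      (kc a' = kc a /\ kc b' = kc b) \/ (kc a' = kc b /\ kc b' = kc a),
      (jc a' = jc a /\ jc b' = jc b) \/ (jc a' = jc b /\ jc b' = jc a) &
      pot a' + pot b' < pot a + pot b].

Lemma quad_phib a b a' b' : quad a b a' b' -> phib (Ux a + Ux b)%MM (Ux a' + Ux b')%MM.
Proof.
case=> e1 e2 ek ej _; apply/phibP; split; first by rewrite !mdegD !mdeg1.
move=> s t; rewrite !S_add !S_U /famf /coord.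
case: (s : nat) => [|[|s']] /=; first by rewrite e1 e2.
  by case: ek => [[-> ->]|[-> ->]] //; rewrite addnC.
by case: ej => [[-> ->]|[-> ->]] //; rewrite addnC.
Qed.

Lemma quad_pot a b a' b' : quad a b a' b' -> Sw pot (Ux a' + Ux b')%MM < Sw pot (Ux a + Ux b)%MM.
Proof. by case=> _ _ _ _ h; rewrite !S_add !S_U. Qed.


Lemma potH_arith (i1 i2 k1 k2 j1 j2 : nat): i1 < i2 -> k1*n + j1 < k2*n + j2 ->
  (n*i1*k2 + m * j2*k2 + i1*j2) + (n*i2*k1 + m * j1*k1 + i2*j1) <
  (n*i1*k1 + m * j1*k1 + i1*j1) + (n*i2*k2 + m * j2*k2 + i2*j2).
Proof.
move=> h1 h2.
have : 0 < (i2 - i1) * ((k2*n + j2) - (k1*n + j1)) by rewrite muln_gt0; apply/andP; split; lia.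
rewrite mulnBl !mulnBr; nia.
Qed.

Lemma potV_arith (i1 i2 k1 k2 j1 j2 : nat): j1 < j2 -> k1 * m + i1 < k2 * m + i2 ->
  (n*i1*k1 + m * j2*k1 + i1*j2) + (n*i2*k2 + m * j1*k2 + i2*j1) <
  (n*i1*k1 + m * j1*k1 + i1*j1) + (n*i2*k2 + m * j2*k2 + i2*j2).
Proof.
move=> h1 h2.
have : 0 < (j2 - j1) * ((k2 * m + i2) - (k1 * m + i1)) by rewrite muln_gt0; apply/andP; split; lia.
rewrite mulnBl !mulnBr; nia.
Qed.

Lemma kc_col (i : 'I_m) (k : 'I_r) (j : 'I_n) : kc ((i, colidx k j) : P) = k.
Proof. by rewrite /kc /ci /= divnMDl // divn_small // addn0. Qed.
Lemma jc_col (i : 'I_m) (k : 'I_r) (j : 'I_n) : jc ((i, colidx k j) : P) = j.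
Proof. by rewrite /jc /ci /= modnMDl modn_small. Qed.

Lemma quadH (a b : P) : ri a < ri b -> ci a < ci b ->
  quad a b (a.1, b.2) (b.1, a.2).
Proof.
move=> h1 h2; split => //; [right; split=> // | right; split => //|].
have h2' : kc a * n + jc a < kc b * n + jc b by rewrite -!v2E.
exact: (potH_arith h1 h2').
Qed.

Lemma quadV (i1 i2 : 'I_m) (k1 k2 : 'I_r) (j1 j2 : 'I_n) :
  j1 < j2 -> k1 * m + i1 < k2 * m + i2 ->
  quad (i1, colidx k1 j1) (i2, colidx k2 j2) (i1, colidx k1 j2) (i2, colidx k2 j1).
Proof.
move=> h1 h2; split => //; first by left; rewrite !kc_col.
  by right; rewrite !jc_col.
rewrite /pot !kc_col !jc_col.
exact: (potV_arith h1 h2).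
Qed.

Lemma minor_quad g d : @is_H_minor K m n r g d \/ @is_V_minor K m n r g d ->
  exists a b a' b', [/\ quad a b a' b', g = (vr a * vr b - vr a' * vr b')%R & d = (vr a * vr b)%R].
Proof.
case=> [[i1 [i2 [c1 [c2 [h1 h2 -> ->]]]]]|[a1 [a2 [j1 [j2 [h1 h2 -> ->]]]]]].
  by exists (i1, c1), (i2, c2), (i1, c2), (i2, c1); split => //; apply: quadH.
exists (a1.2, colidx a1.1 j1), (a2.2, colidx a2.1 j2), (a1.2, colidx a1.1 j2), (a2.2, colidx a2.1 j1).
split => //; apply: quadV => //.
Qed.

Lemma bad_minor a b : bad a b -> exists a' b', quad a b a' b' /\
  (@is_H_minor K m n r (vr a * vr b - vr a' * vr b')%R (vr a * vr b)%R \/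
   @is_V_minor K m n r (vr a * vr b - vr a' * vr b')%R (vr a * vr b)%R).
Proof.
case: a b => [ai ac] [bi bc]; rewrite /bad => /orP [/andP [h1 h2]|/andP [h1 h2]].
  exists (ai, bc), (bi, ac); split; first exact: quadH.
  by left; exists ai, bi, ac, bc.
pose ka := Ordinal (kc_lt hn (ai, ac)); pose ja := Ordinal (jc_lt hn (ai, ac)).
pose kb := Ordinal (kc_lt hn (bi, bc)); pose jb := Ordinal (jc_lt hn (bi, bc)).
have ea : colidx ka ja = ac by apply: val_inj; rewrite /= -(v2E (ai, ac)).
have eb : colidx kb jb = bc by apply: val_inj; rewrite /= -(v2E (bi, bc)).
exists (ai, colidx ka jb), (bi, colidx kb ja); split.
  rewrite -{1}ea -{1}eb; apply: quadV => //=.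
  have := ltn_ord ai; have := ltn_ord bi; nia.
right; exists (ka, ai), (kb, bi), ja, jb; split => //.
- rewrite /Vrow /=; have := ltn_ord ai; have := ltn_ord bi; nia.
- by rewrite /minor2 /V /x /= ea eb.
- by rewrite /diag2 /V /x /= ea eb.
Qed.

Lemma lead_quad a b a' b' : quad a b a' b' ->
  lead_term_is le (vr a * vr b - vr a' * vr b')%R (vr a * vr b)%R ->
  le (Ux a' + Ux b')%MM (Ux a + Ux b)%MM.
Proof.
move=> hq; rewrite !varE -!mpolyXD.
set D := (Ux a + Ux b)%MM; set A := (Ux a' + Ux b')%MM.
have nDA : D != A.
  by apply/eqP => eDA; have := quad_pot hq; rewrite -/D -/A eDA ltnn.
case=> u [[uin hle] e].
have uD : u = D.
  have := congr1 (mcoeff D) e; rewrite mcoeffZ !mcoeffX eqxx.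
  by case: eqP => // _; rewrite mulr0 => /eqP; rewrite oner_eq0.
rewrite -uD; apply: hle.
by rewrite mcoeff_msupp mcoeffB !mcoeffX eqxx (negbTE nDA) sub0r oppr_eq0 oner_eq0.
Qed.



Definition std (u : 'X_{1..N}) := forall a b, bad a b -> ~~ (Ux a + Ux b <= u)%MM.

Lemma bad_neq a b : bad a b -> a != b.
Proof. by move=> h; apply/eqP => e; move: h; rewrite e /bad !ltnn. Qed.

Lemma lepair a b (u : 'X_{1..N}) : a != b -> 0 < u (rk a) -> 0 < u (rk b) -> (Ux a + Ux b <= u)%MM.
Proof.
move=> ab ha hb; apply/mnm_lepP => t; rewrite mnmDE /Ux !mnm1E.
case: (eqVneq (rk a) t) => [eat|nat].
  have nbt : rk b != t by rewrite -eat (inj_eq rk_inj) eq_sym.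
  by rewrite (negbTE nbt) -eat /= addn0.
case: (eqVneq (rk b) t) => [ebt|nbt]; last by [].
by rewrite -ebt.
Qed.

Lemma lepair_inv a b (u : 'X_{1..N}) : (Ux a + Ux b <= u)%MM -> 0 < u (rk a) /\ 0 < u (rk b).
Proof.
move/mnm_lepP => h; split; [have := h (rk a) | have := h (rk b)];
  rewrite mnmDE /Ux !mnm1E eqxx /=; lia.
Qed.

Lemma kclt (c : 'I_(r * n)) : c %/ n < r.
Proof. by rewrite ltn_divLR. Qed.
Definition cinv (c : 'I_(r * n)) : 'I_r * 'I_n := (Ordinal (kclt c), Ordinal (ltn_pmod c hn)).
Lemma colidx_cinv c : colidx (cinv c).1 (cinv c).2 = c.
Proof. by apply: val_inj; rewrite /= -divn_eq. Qed.
Lemma cinv_colidx k j : cinv (colidx k j) = (k, j).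
Proof.
congr pair; apply: val_inj; rewrite /=.
  by rewrite divnMDl // divn_small // addn0.
by rewrite modnMDl modn_small.
Qed.

Lemma sum_cols (F : 'I_(r * n) -> nat) :
  \sum_c F c = \sum_(k : 'I_r) \sum_(j : 'I_n) F (colidx k j).
Proof.
rewrite pair_big /= (reindex (fun kj : 'I_r * 'I_n => colidx kj.1 kj.2)) //=.
by exists cinv => [[k j]|c] _ /=; [exact: cinv_colidx | exact: colidx_cinv].
Qed.

Definition fu (w : 'X_{1..N}) (i : 'I_m) (c : 'I_(r * n)) := w (rk (i, c)).
Definition mu (w : 'X_{1..N}) (k : 'I_r) (j : 'I_n) := \sum_(i : 'I_m) w (rk (i, colidx k j)).

Lemma S_sum (f : P -> nat) w :
  Sw f w = \sum_(i : 'I_m) \sum_(c : 'I_(r * n)) f (i, c) * w (rk (i, c)).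
Proof. by rewrite /Sw pair_big; apply: eq_bigr => [[i c]] _. Qed.

Lemma marg_row w (i : 'I_m) : Sw (famf 0 i) w = \sum_c fu w i c.
Proof.
rewrite S_sum (bigD1 i) //= [X in _ + X]big1 ?addn0.
  by apply: eq_bigr => c _; rewrite /famf /coord /ri /= eqxx mul1n.
move=> i' ni; apply: big1 => c _.
rewrite /famf /coord /ri /=; case: eqP => // /val_inj e; by move: ni; rewrite e eqxx.
Qed.

Lemma marg_k w (k : 'I_r) : Sw (famf 1 k) w = \sum_j mu w k j.
Proof.
transitivity (\sum_(i : 'I_m) \sum_(j : 'I_n) w (rk (i, colidx k j))); last first.
  by rewrite /mu exchange_big.
rewrite S_sum; apply: eq_bigr => i _.
rewrite (sum_cols (fun c => famf 1 k (i, c) * w (rk (i, c)))) (bigD1 k) //= [X in _ + X]big1 ?addn0.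
  by apply: eq_bigr => j _; rewrite /famf /coord /= kc_col eqxx mul1n.
move=> k' nk; apply: big1 => j _.
rewrite /famf /coord /= kc_col; case: eqP => // /val_inj e; by move: nk; rewrite e eqxx.
Qed.

Lemma marg_j w (j : 'I_n) : Sw (famf 2 j) w = \sum_k mu w k j.
Proof.
transitivity (\sum_(i : 'I_m) \sum_(k : 'I_r) w (rk (i, colidx k j))); last first.
  by rewrite /mu exchange_big.
rewrite S_sum; apply: eq_bigr => i _.
rewrite (sum_cols (fun c => famf 2 j (i, c) * w (rk (i, c)))).
apply: eq_bigr => k _; rewrite (bigD1 j) //= [X in _ + X]big1 ?addn0.
  by rewrite /famf /coord /= jc_col eqxx mul1n.
move=> j' nj.
rewrite /famf /coord /= jc_col; case: eqP => // /val_inj e; by move: nj; rewrite e eqxx.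
Qed.

Lemma std_uniq u w : std u -> std w -> phib u w -> u = w.
Proof.
move=> su sw /phibP [_ hphi].
have row : forall i, \sum_c fu u i c = \sum_c fu w i c.
  move=> i; rewrite -!marg_row.
  have hi : (i : nat) < TT by rewrite /TT; have := ltn_ord i; lia.
  exact: (hphi (@Ordinal 3 0 isT) (Ordinal hi)).
have kmarg : forall k, \sum_j mu u k j = \sum_j mu w k j.
  move=> k; rewrite -!marg_k.
  have hi : (k : nat) < TT by rewrite /TT; have := ltn_ord k; lia.
  exact: (hphi (@Ordinal 3 1 isT) (Ordinal hi)).
have jmarg : forall j, \sum_k mu u k j = \sum_k mu w k j.
  move=> j; rewrite -!marg_j.
  have hi : (j : nat) < TT by rewrite /TT; have := ltn_ord j; lia.
  exact: (hphi (@Ordinal 3 2 isT) (Ordinal hi)).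
have acfmu : forall w0, std w0 -> acf (mu w0).
  move=> w0 s0 k1 k2 j1 j2 hk hj p1 p2.
  have [i1 hi1] := sum_pos p1; have [i2 hi2] := sum_pos p2.
  have hb : bad (i1, colidx k1 j1) (i2, colidx k2 j2).
    by rewrite /bad !kc_col !jc_col hk hj orbT.
  move/negP: (s0 _ _ hb); apply; apply: lepair => //; exact: bad_neq.
have emu := lemA (acfmu u su) (acfmu w sw) kmarg jmarg.
have acffu : forall w0, std w0 -> acf (fu w0).
  move=> w0 s0 i1 i2 c1 c2 hi hc p1 p2.
  have hb : bad (i1, c1) (i2, c2) by rewrite /bad /ri /ci /= hi hc.
  move/negP: (s0 _ _ hb); apply; apply: lepair => //; exact: bad_neq.
have col : forall c, \sum_i fu u i c = \sum_i fu w i c.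
  by move=> c; rewrite -(colidx_cinv c); exact: emu.
have efu := lemA (acffu u su) (acffu w sw) row col.
apply/mnmP => t; rewrite -(enum_valK t).
by case: (enum_val t) => i c; exact: efu.
Qed.

Lemma std_step u w : phib w u -> ~ std w ->
  exists w', [/\ phib w' u, Sw pot w' < Sw pot w & le w' w].
Proof.
case: hdiag => [[[refl anti trans tot] [zero transl]] hlead].
move=> hw nsw.
have [a [b /andP [hab hle]]] : exists a b, bad a b && (Ux a + Ux b <= w)%MM.
  apply: NNPP => hneg; apply: nsw => a b hab; apply/negP => hle; apply: hneg.
  by exists a, b; rewrite hab hle.
have [a' [b' [hq hmin]]] := bad_minor hab.
have leAD := lead_quad hq (hlead _ _ hmin).
set D := (Ux a + Ux b)%MM in hle leAD; set A := (Ux a' + Ux b')%MM in leAD.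
have wE : w = (w - D + D)%MM by rewrite submK.
exists (w - D + A)%MM; split.
- apply: (phib_trans _ hw); rewrite [X in phib _ X]wE; apply: phib_add.
  by apply: phib_sym; exact: quad_phib.
- by rewrite [X in _ < Sw pot X]wE !S_add ltn_add2l; move: (quad_pot hq); rewrite !S_add.
rewrite [X in le _ X]wE addmC [X in le _ X]addmC.
exact: transl.
Qed.

Lemma std_min u : std u -> forall w, phib w u -> le u w.
Proof.
case: hdiag => [[[refl anti trans tot] [zero transl]] hlead].
move=> su.
suff H : forall M w, Sw pot w <= M -> phib w u -> le u w by move=> w; apply: H (leqnn _).
elim=> [|M IH] w hM hw;
  (case: (classic (std w)) => [sw|nsw]; first by rewrite (std_uniq sw su hw); apply: refl);
  have [w' [hw' hp hle]] := std_step hw nsw.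
  by lia.
apply: (trans w'); last exact: hle.
by apply: IH => //; lia.
Qed.

Lemma coefMX (q : poly) x w : ((q * 'X_[x])@_w = \sum_(v <- msupp q) q@_v * ((v + x)%MM == w)%:R)%R.
Proof.
rewrite {1}(mpolyE q) mulr_suml raddf_sum /=; apply: eq_bigr => v _.
by rewrite -scalerAl -mpolyXD mcoeffZ mcoeffX.
Qed.

Lemma coefMX0 (q : poly) x w : ~~ (x <= w)%MM -> ((q * 'X_[x])@_w = 0)%R.
Proof.
move=> nx; rewrite coefMX big1 // => v _; case: eqP => [e|]; last by rewrite mulr0.
by move: nx; rewrite -e lem_addl.
Qed.


Local Open Scope ring_scope.

Lemma lead_nonstd (p : poly) u : @Imnr K m n r p -> is_lead le p u -> ~ std u.
Proof.
case: hdiag => [[[refl anti trans tot] [zero transl]] hlead].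
move=> [s [hs ep]] [uin hle] su.
pose Dg := (mdeg u).+1.
pose Lf (q : poly) : K := \sum_(w : 'X_{1..N < Dg}) (phib w u)%:R * q@_w.
have Lsum : forall (T : Type) (s0 : seq T) (F : T -> poly),
    Lf (\sum_(x <- s0) F x) = \sum_(x <- s0) Lf (F x).
  move=> T s0 F; rewrite /Lf; under eq_bigr do rewrite raddf_sum mulr_sumr.
  exact: exchange_big.
have Lsub : forall q1 q2, Lf (q1 - q2) = Lf q1 - Lf q2.
  by move=> q1 q2; rewrite /Lf -sumrB; apply: eq_bigr => w _; rewrite mcoeffB mulrBr.
have key : forall y : 'X_{1..N},
    \sum_(w : 'X_{1..N < Dg}) (phib w u)%:R * ((y == val w)%:R : K) = (phib y u)%:R.
  move=> y; case: (boolP (phib y u)) => hy.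
    have hd : (mdeg y < Dg)%N by move/phibP: hy => [-> _].
    rewrite (bigD1 (BMultinom hd)) //= eqxx hy mulr1 big1 ?addr0 // => w nw.
    case: eqP => [e|_]; last by rewrite mulr0.
    by exfalso; move/negP: nw; apply; apply/eqP; apply: val_inj; rewrite /= e.
  rewrite big1 // => w _; case: eqP => [e|_]; last by rewrite mulr0.
  by rewrite -e (negbTE hy) mul0r.
have Lx : forall q x, Lf (q * 'X_[x]) = \sum_(v <- msupp q) q@_v * (phib (v + x)%MM u)%:R.
  move=> q x; rewrite /Lf; under eq_bigr do rewrite coefMX mulr_sumr.
  rewrite exchange_big /=; apply: eq_bigr => v _.
  rewrite -key mulr_sumr; apply: eq_bigr => w _.
  by rewrite mulrCA.
have Lgen : forall pr, pr \in s -> Lf (pr.1 * pr.2) = 0.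
  move=> pr /hs [d hd]; have [a [b [a' [b' [hq -> _]]]]] := minor_quad hd.
  rewrite !varE -!mpolyXD mulrBr Lsub !Lx -sumrB big1 // => v _.
  have e : phib (v + (Ux a + Ux b))%MM u = phib (v + (Ux a' + Ux b'))%MM u.
    apply/idP/idP => h; apply: (phib_trans _ h); apply: phib_add.
      by apply: phib_sym; exact: quad_phib.
    exact: quad_phib.
  by rewrite e subrr.
have L0 : Lf p = 0 by rewrite ep Lsum big_seq big1 // => pr /Lgen.
have L1 : Lf p = p@_u.
  rewrite /Lf (bigD1 (BMultinom (ltnSn (mdeg u)))) //= phib_refl mul1r big1 ?addr0 // => w nw.
  case: (boolP (phib w u)) => hw; last by rewrite mul0r.
  rewrite memN_msupp_eq0 ?mulr0 //; apply/negP => win.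
  have e : val w = u by apply: anti; rewrite (hle _ win) (std_min su hw).
  by move/negP: nw; apply; apply/eqP; apply: val_inj; rewrite /= e.
by move: uin; rewrite mcoeff_msupp -L1 L0 eqxx.
Qed.


Lemma face_iff (F : {set P}) :
  @SR_face K m n r (initial_ideal le (@Imnr K m n r)) F <-> face_c F.
Proof.
case: hdiag => [_ hlead].
pose mF := (\big[+%MM/0%MM]_(v in F) Ux v)%MM.
have xF : \prod_(v in F) vr v = 'X_[mF] by rewrite /mF -mprodXE.
have mFv : forall v, mF (rk v) = (v \in F).
  move=> v; rewrite /mF mnm_sumE.
  case: (boolP (v \in F)) => vF.
    rewrite (bigD1 v) //= /Ux mnm1E eqxx big1 ?addn0 // => x /andP [_ xv].
    by rewrite mnm1E (inj_eq rk_inj) (negbTE xv).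
  rewrite big1 // => x xF0; rewrite /Ux mnm1E (inj_eq rk_inj); case: eqP => // e.
  by move: vF; rewrite -e xF0.
split.
  move=> hface v w vF wF; apply/negP => hb; apply: hface.
  have [a' [b' [hq hmin]]] := bad_minor hb.
  have hlt := hlead _ _ hmin.
  set g := (vr v * vr w - vr a' * vr b') in hlt hmin *.
  exists [:: (\prod_(x | (x \in F) && (x != v) && (x != w)) vr x, vr v * vr w)]; split.
    move=> pr; rewrite inE => /eqP -> /=; exists g; split => //.
      exists [:: (1, g)]; split; last by rewrite big_cons big_nil mul1r addr0.
      by move=> pr'; rewrite inE => /eqP -> /=; exists (vr v * vr w).
    case: hlt => u0 [[u0in _] _]; apply/eqP => g0.
    by move: u0in; rewrite mcoeff_msupp g0 mcoeff0 eqxx.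
  rewrite big_cons big_nil addr0 (bigD1 v) //= (bigD1 w) /=; last first.
    by rewrite wF eq_sym; apply: bad_neq.
  by rewrite mulrA [RHS]mulrC.
move=> hf [s [hs eqs]].
have : (\prod_(v in F) vr v)@_mF = 1 by rewrite xF mcoeffX eqxx.
rewrite eqs raddf_sum big_seq big1 => [|pr prin].
  by move/eqP; rewrite eq_sym oner_eq0.
have [p0 [hI _ [u0 [hl ->]]]] := hs pr prin.
rewrite /= -scalerAr mcoeffZ coefMX0 ?mulr0 //; apply/negP => hle.
apply: (lead_nonstd hI hl) => a b hab; apply/negP => hab'.
have [ha hb] := lepair_inv (lepm_trans hab' hle).
rewrite !mFv !lt0b in ha hb.
by move/negP: (hf a b ha hb).
Qed.

End Alg.

Theorem theorem5p4 (K : fieldType) (m n r : nat)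
  (hm : (0 < m)%N) (hn : (0 < n)%N) (hr : (0 < r)%N)
  (le : rel 'X_{1..NV m n r}) (hdiag : @diagonal K m n r le)
  (F : {set Pt m n r}) :
  @SR_facet K m n r (@initial_ideal K m n r le (@Imnr K m n r)) F <->
  exists (g h : nat -> nat),
    [/\ g 0%N = m, g r = 1%N & (forall k, (k < r)%N -> (g k.+1 <= g k)%N)] /\
    [/\ h 0%N = n, h r = 1%N & (forall k, (k < r)%N -> (h k.+1 <= h k)%N)] /\
        (exists S : 'I_r -> {set Pt m n r},
          (forall k : 'I_r,
             @is_path m n r (S k) (g k, k * n + h k.+1)%N (g k.+1, k * n + h k)%N) /\
          F = \bigcup_(k < r) S k).
Proof.
have fi := fun G => face_iff hm hn hr hdiag G.
split.
  case=> hF hmax.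
  have fF := (fi F).1 hF.
  have mF : forall G, face_c G -> F \subset G -> G = F.
    by move=> G hG sub; apply: hmax => //; apply/fi.
  have [g [h [S [[gc [hc hp]] eF]]]] := facet_PU hm hn hr fF mF.
  by exists g, h; split => //; split => //; exists S.
case=> g [h [gc [hc [S [hp ->]]]]].
have hPU : PU g h S by split => //; split.
have [f1 f2] := PU_facet hm hn hr hPU.
split; first by apply/fi.
by move=> G hG sub; apply: f2 => //; apply/fi.
Qed.
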